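(* For every integer $r\ge2$, $$\int_0^{\frac\pi2} \theta^{r-2}\log\left(\cos\frac\theta2\right)d\theta=-\frac{\pi^{r-1}}{r-1}\left(\frac1{2^r}\log2+2^{r-1}\log\mathcal C_r\left(\frac14\right)\right).$$
   Context: For an integer $r\ge2$ let $P_r(y)=(1-y)\exp\left(y+\frac{y^2}{2}+\cdots+\frac{y^r}{r}\right)$. The multiple cosine function of Kurokawa–Koyama of order $r\ge2$ is $\mathcal C_r(x)=\prod_{n\ge1,\ n\text{ odd}}\left\{P_r\left(\frac{x}{n/2}\right)P_r\left(-\frac{x}{n/2}\right)^{(-1)^{r-1}}\right\}^{(n/2)^{r-1}}$, interpreted as $\mathcal C_r(x)=\exp\Big(\sum_{n\ge1,\,n\text{ odd}}(n/2)^{r-1}\big[\operatorname{Log}P_r(2x/n)+(-1)^{r-1}\operatorname{Log}P_r(-2x/n)\big]\Big)$, where $\operatorname{Log}P_r(y):=\operatorname{Log}(1-y)+y+\frac{y^2}{2}+\cdots+\frac{y^r}{r}$ with $\operatorname{Log}$ the principal branch. The series converges and defines a holomorphic function on $D=\mathbb C\setminus\big((-\infty,-\tfrac12]\cup[\tfrac12,\infty)\big)$, positive on $(-\tfrac12,\tfrac12)$; $\log\mathcal C_r(x)$ denotes the exponent above (the real logarithm for real $|x|<\tfrac12$). *)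

(* Defs.v *)
From Stdlib Require Import Reals.
From Coquelicot Require Import Coquelicot.
Open Scope R_scope.

(* Log P_r(y) := Log(1-y) + y + y^2/2 + ... + y^r/r, for real y < 1
   (where the principal Log agrees with the real ln). *)
Definition LogP (r : nat) (y : R) : R :=
  ln (1 - y) + sum_f_R0 (fun k => y ^ (S k) / INR (S k)) (pred r).

Definition logC_term (r : nat) (x : R) (m : nat) : R :=
  let n := INR (2 * m + 1) in
  (n / 2) ^ (r - 1) * (LogP r (2 * x / n) + (-1) ^ (r - 1) * LogP r (- (2 * x / n))).

(* log C_r(x) for real |x| < 1/2: the (convergent) series over odd n >= 1. *)
Definition logC (r : nat) (x : R) : R := Series (logC_term r x).

(* Main.v *)
Require Import Defs.
From Stdlib Require Import Reals Lra Lia.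
From Coquelicot Require Import Coquelicot.
From Stdlib Require Import ssreflect.
Open Scope R_scope.

Lemma RIntD (f df : R -> R) a b :
  (forall x, Rmin a b <= x <= Rmax a b -> is_derive f x (df x)) ->
  (forall x, Rmin a b <= x <= Rmax a b -> continuous df x) ->
  is_RInt df a b (f b - f a).
Proof. move=> H1 H2. exact: (@is_RInt_derive R_CompleteNormedModule f df a b H1 H2). Qed.
Lemma contD (f : R -> R) x : ex_derive f x -> continuous f x.
Proof. exact: (@ex_derive_continuous R_AbsRing R_NormedModule). Qed.
Lemma exRIntC (f : R -> R) a b : (forall z, Rmin a b <= z <= Rmax a b -> continuous f z) -> ex_RInt f a b.
Proof. exact: (@ex_RInt_continuous R_CompleteNormedModule). Qed.
Lemma RInt_uniq (f : R -> R) a b l : is_RInt f a b l -> RInt f a b = l.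
Proof. exact: (@is_RInt_unique R_CompleteNormedModule). Qed.
Lemma RInt_cor (f : R -> R) a b : ex_RInt f a b -> is_RInt f a b (RInt f a b).
Proof. exact: (@RInt_correct R_CompleteNormedModule). Qed.
Lemma RInt_lin (f g : R -> R) a b c d : ex_RInt f a b -> ex_RInt g a b ->
  RInt (fun t => c * f t + d * g t) a b = c * RInt f a b + d * RInt g a b.
Proof.
  move=> Hf Hg. apply RInt_uniq.
  apply: (@is_RInt_plus R_NormedModule (fun t => c * f t) (fun t => d * g t)).
  apply: (@is_RInt_scal R_NormedModule). exact: RInt_cor.
  apply: (@is_RInt_scal R_NormedModule). exact: RInt_cor.
Qed.
Lemma exRInt_lin (f g : R -> R) a b c d : ex_RInt f a b -> ex_RInt g a b ->
  ex_RInt (fun t => c * f t + d * g t) a b.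
Proof. move=> Hf Hg. eexists. apply: (@is_RInt_plus R_NormedModule (fun t => c * f t) (fun t => d * g t)).
  apply: (@is_RInt_scal R_NormedModule). exact: RInt_cor.
  apply: (@is_RInt_scal R_NormedModule). exact: RInt_cor.
Qed.
Lemma RInt_sc (f : R -> R) a b c : ex_RInt f a b ->
  RInt (fun t => c * f t) a b = c * RInt f a b.
Proof. move=> Hf. exact: (@RInt_scal R_CompleteNormedModule f a b c Hf). Qed.
Lemma is_derive_conv (f g : R -> R) x d d' :
  is_derive f x d -> (forall t, f t = g t) -> d = d' -> is_derive g x d'.
Proof. move=> H1 H2 <-. exact: (is_derive_ext f g x d H2 H1). Qed.

Definition Iint (n : nat) (x : R) : R :=
  RInt (fun t => cos (2 * x * t) * cos t ^ n) 0 (PI / 2).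

Lemma ex_I n x : ex_RInt (fun t => cos (2 * x * t) * cos t ^ n) 0 (PI / 2).
Proof.
  apply: exRIntC => z _. apply: contD. auto_derive. auto.
Qed.

Lemma I_rec_gen k x :
  ((INR k + 2) ^ 2 - 4 * x ^ 2) * Iint (k + 2) x
  = (INR k + 2) * (INR k + 1) * Iint k x.
Proof.
  set F := fun t => (INR k + 2) * cos (2 * x * t) * cos t ^ (k + 1) * sin t
                    - 2 * x * sin (2 * x * t) * cos t ^ (k + 2).
  set df := fun t => ((INR k + 2) ^ 2 - 4 * x ^ 2) * (cos (2 * x * t) * cos t ^ (k + 2))
                     + (- ((INR k + 2) * (INR k + 1))) * (cos (2 * x * t) * cos t ^ k).
  have H1 : is_RInt df 0 (PI / 2) (F (PI/2) - F 0).
  { apply RIntD.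
    - move => t _. rewrite /F /df.
      auto_derive; first by auto.
      rewrite !pow_add !plus_INR /=.
      have Hs := sin2_cos2 t. unfold Rsqr in Hs.
      rewrite (_ : (Init.Nat.pred (k + 1) = k)%nat); last lia.
      rewrite (_ : (Init.Nat.pred (k + 2) = k + 1)%nat); last lia.
      rewrite pow_add /=.
      apply Rminus_diag_uniq.
      transitivity (- ((INR k + 2) * (INR k + 1)) * cos (2 * x * t) * cos t ^ k * (sin t * sin t + cos t * cos t - 1)); [ring | rewrite Hs; ring].
    - move => t _. apply contD. rewrite /df. auto_derive. auto. }
  have H2 : F (PI/2) - F 0 = 0.
  { rewrite /F /= cos_PI2 sin_0 !pow_add. have -> : 2 * x * 0 = 0 by ring. rewrite sin_0 /=. ring. }
  rewrite H2 in H1. apply RInt_uniq in H1.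
  rewrite /df RInt_lin in H1; try apply ex_I.
  rewrite /Iint. lra.
Qed.

Lemma I1 x : (1 - 4 * x ^ 2) * Iint 1 x = cos (PI * x).
Proof.
  set F := fun t => cos (2 * x * t) * sin t - 2 * x * sin (2 * x * t) * cos t.
  have H1 : is_RInt (fun t => (1 - 4 * x ^ 2) * (cos (2 * x * t) * cos t ^ 1)) 0 (PI / 2) (F (PI/2) - F 0).
  { apply RIntD.
    - move => t _. rewrite /F. auto_derive; first by auto. ring.
    - move => t _. apply contD. auto_derive. auto. }
  have H2 : F (PI/2) - F 0 = cos (PI * x).
  { rewrite /F /= cos_PI2 sin_PI2. have -> : 2 * x * 0 = 0 by ring.
    rewrite sin_0. have -> : 2 * x * (PI / 2) = PI * x by field. ring. }
  rewrite H2 in H1. apply RInt_uniq in H1.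
  rewrite -H1 /Iint.
  rewrite RInt_sc //. apply ex_I.
Qed.

Lemma I_1_0 : Iint 1 0 = 1.
Proof. have := I1 0. rewrite Rmult_0_r cos_0. lra. Qed.

Lemma I_rec0 N : Iint (2 * S N + 1) 0 = (2 * INR N + 2) / (2 * INR N + 3) * Iint (2 * N + 1) 0.
Proof.
  have := I_rec_gen (2 * N + 1) 0.
  rewrite (_ : (2 * N + 1 + 2 = 2 * S N + 1)%nat); last lia.
  rewrite plus_INR mult_INR /=. move => H.
  set A := Iint _ 0 in H *. set B := Iint (N + (N + 0) + 1) 0 in H *.
  have Hn := pos_INR N. set n := INR N in H Hn *.
  apply (Rmult_eq_reg_l ((2*n+3)*(2*n+3))); last by apply: Rgt_not_eq; nra.
  transitivity ((((1 + 1) * n + 1 + 2) * (((1 + 1) * n + 1 + 2) * 1) - 4 * (0 * (0 * 1))) * A); first ring.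
  rewrite H. field. lra.
Qed.

Lemma I0pos N : 0 < Iint (2 * N + 1) 0.
Proof.
  elim: N => [|N IH]. rewrite /= I_1_0; lra.
  rewrite I_rec0. have Hn := pos_INR N.
  apply Rmult_lt_0_compat => //. apply Rdiv_lt_0_compat; lra.
Qed.

Lemma cos_pow_nonneg n t : 0 <= t <= PI / 2 -> 0 <= cos t ^ n.
Proof.
  move => Ht. apply pow_le. apply cos_ge_0; lra.
Qed.

Lemma I_le n x : Iint n x <= Iint n 0.
Proof.
  rewrite /Iint. apply RInt_le; try apply ex_I.
  - have := PI_RGT_0. lra.
  - move => t Ht. have -> : 2 * 0 * t = 0 by ring. rewrite cos_0.
    have := cos_pow_nonneg n t (conj (Rlt_le _ _ (proj1 Ht)) (Rlt_le _ _ (proj2 Ht))).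
    have := COS_bound (2 * x * t). nra.
Qed.

Lemma I_ge n x : 0 <= x <= 1 -> Iint n 0 - Iint n x <= 2 * (Iint n 0 - Iint (n + 2) 0).
Proof.
  move => Hx.
  have E1 : Iint n 0 - Iint n x = RInt (fun t => 1 * (cos (2 * 0 * t) * cos t ^ n) + (-1) * (cos (2 * x * t) * cos t ^ n)) 0 (PI/2).
  { rewrite RInt_lin; try apply ex_I. rewrite /Iint. ring. }
  have E2 : 2 * (Iint n 0 - Iint (n + 2) 0) = RInt (fun t => 2 * (cos (2 * 0 * t) * cos t ^ n) + (-2) * (cos (2 * 0 * t) * cos t ^ (n + 2))) 0 (PI/2).
  { rewrite RInt_lin; try apply ex_I. rewrite /Iint. ring. }
  rewrite E1 E2. apply RInt_le; try (apply exRInt_lin; apply ex_I).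
  - have := PI_RGT_0. lra.
  - move => t Ht. have -> : 2 * 0 * t = 0 by ring. rewrite cos_0 pow_add.
    have Hc := cos_pow_nonneg n t (conj (Rlt_le _ _ (proj1 Ht)) (Rlt_le _ _ (proj2 Ht))).
    have Hd : cos (2 * t) <= cos (2 * x * t).
    { apply cos_decr_1; nra. }
    rewrite cos_2a_sin in Hd.
    have Hs := sin2_cos2 t. unfold Rsqr in Hs. simpl.
    nra.
Qed.

Definition rho N x := Iint (2 * N + 1) x / Iint (2 * N + 1) 0.

Lemma rho_bounds N x : 0 <= x <= 1 -> 1 - 2 / (2 * INR N + 3) <= rho N x <= 1.
Proof.
  move => Hx. have Hc := I0pos N. have Hn := pos_INR N.
  have Hl := I_le (2 * N + 1) x. have Hg := I_ge (2 * N + 1) x Hx.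
  rewrite (_ : (2 * N + 1 + 2 = 2 * S N + 1)%nat) in Hg; last lia.
  rewrite I_rec0 in Hg. rewrite /rho.
  set c := Iint (2 * N + 1) 0 in Hc Hl Hg *. set a := Iint (2 * N + 1) x in Hl Hg *.
  split.
  - apply (Rmult_le_reg_r c) => //. rewrite /Rdiv Rmult_assoc Rinv_l; last lra.
    rewrite (_ : (2 * (c - (2 * INR N + 2) / (2 * INR N + 3) * c)) = 2 * / (2 * INR N + 3) * c) in Hg; last by field; lra.
    lra.
  - apply (Rmult_le_reg_r c) => //. rewrite /Rdiv Rmult_assoc Rinv_l; lra.
Qed.

Lemma rho_pos N x : 0 <= x <= 1 -> 0 < rho N x.
Proof.
  move => Hx. have [H1 _] := rho_bounds N x Hx. have Hn := pos_INR N.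
  have : 2 / (2 * INR N + 3) <= 2 / 3.
  { apply Rmult_le_compat_l; first lra. apply Rinv_le_contravar; lra. }
  lra.
Qed.

Lemma rho0 x : 1 - 4 * x ^ 2 <> 0 -> rho 0 x * (1 - 4 * x ^ 2) = cos (PI * x).
Proof.
  move => Hx. rewrite /rho /= I_1_0 -I1. field.
Qed.

Lemma rho_rec N x : 0 <= x <= 1/4 ->
  rho N x = rho (S N) x * (1 - 4 * x ^ 2 / INR (2 * S N + 1) ^ 2).
Proof.
  move => Hx. have Hc := I0pos N.
  have H := I_rec_gen (2 * N + 1) x.
  rewrite (_ : (2 * N + 1 + 2 = 2 * S N + 1)%nat) in H; last lia.
  rewrite /rho I_rec0.
  have EK : INR (2 * S N + 1) = INR (2 * N + 1) + 2. by rewrite !plus_INR ?mult_INR ?S_INR /=; ring.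
  have E1 : 2 * INR N + 2 = INR (2 * N + 1) + 1 by rewrite !plus_INR ?mult_INR ?S_INR /=; ring.
  have E2 : 2 * INR N + 3 = INR (2 * N + 1) + 2 by rewrite !plus_INR ?mult_INR ?S_INR /=; ring.
  rewrite EK E1 E2.
  have HK : 0 <= INR (2 * N + 1) := pos_INR _.
  move: H Hc HK. 
  generalize (Iint (2 * N + 1) 0) (Iint (2 * N + 1) x) (Iint (2 * S N + 1) x) (INR (2 * N + 1)).
  move => c a b K H Hc HK.
  apply (Rmult_eq_reg_r (c * (K + 1) * (K + 2))); last by apply: Rgt_not_eq; nra.
  field_simplify; try lra.
Qed.

Definition Lm (m : nat) (t : R) := ln (1 - 4 * t ^ 2 / INR (2 * m + 1) ^ 2).

Lemma Lm_arg_pos m t : 0 <= t <= 1/4 -> 0 < 1 - 4 * t ^ 2 / INR (2 * m + 1) ^ 2.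
Proof.
  move => Ht. have Hm : 1 <= INR (2 * m + 1).
  { rewrite plus_INR. have := pos_INR (2 * m). simpl. lra. }
  have : 4 * t ^ 2 / INR (2 * m + 1) ^ 2 <= 4 * t ^ 2.
  { rewrite /Rdiv. have Hp : 0 <= 4 * t ^ 2 by nra.
    rewrite -{2}(Rmult_1_r (4 * t ^ 2)). apply Rmult_le_compat_l => //.
    rewrite -Rinv_1. apply Rinv_le_contravar; first lra. nra. }
  nra.
Qed.

Lemma ln_cos_sum N x : 0 <= x <= 1/4 ->
  ln (cos (PI * x)) = sum_f_R0 (fun m => Lm m x) N + ln (rho N x).
Proof.
  move => Hx. have Hx1 : 0 <= x <= 1 by lra.
  elim: N => [|N IH].
  - rewrite /= /Lm -rho0; last by nra.
    rewrite (_ : INR (2 * 0 + 1) = 1); last by rewrite /=; ring.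
    rewrite ln_mult; first (rewrite (_ : 4 * x ^ 2 / 1 ^ 2 = 4 * x ^ 2); [ring | field]).
    + exact: rho_pos.
    + nra.
  - rewrite IH /= (rho_rec N x Hx) ln_mult.
    + rewrite /Lm. ring.
    + exact: rho_pos.
    + exact: Lm_arg_pos.
Qed.

Lemma Sp_derive N y :
  is_derive (fun y => sum_f_R0 (fun k => y ^ (S k) / INR (S k)) N) y (sum_f_R0 (fun k => y ^ k) N).
Proof.
  elim: N => [|N IH].
  - rewrite /=. auto_derive; first by auto. field.
  - rewrite /=. apply: (is_derive_plus (fun y => sum_f_R0 (fun k => y ^ (S k) / INR (S k)) N)
                                     (fun y => y ^ (S (S N)) / INR (S (S N)))) => //.
    have H : INR (S (S N)) <> 0 by apply: not_0_INR.
    auto_derive; first by auto. 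
    rewrite /=. field. exact H.
Qed.

Lemma LogP_derive p y : y < 1 ->
  is_derive (LogP (S p)) y (- y ^ (S p) / (1 - y)).
Proof.
  move => Hy. rewrite /LogP /=.
  have E : - y ^ (S p) / (1 - y) = plus (- 1 / (1 - y)) (sum_f_R0 (fun k => y ^ k) p).
  { rewrite tech3; last lra. rewrite /plus /=. field. lra. }
  rewrite E.
  apply: (is_derive_plus (fun y => ln (1 - y)) (fun y => sum_f_R0 (fun k => y ^ (S k) / INR (S k)) p)).
  - auto_derive; first lra. field. lra.
  - exact: Sp_derive.
Qed.

Lemma neg1_sq k : (-1) ^ k * (-1) ^ k = 1.
Proof.
  elim: k => [|k IH]. simpl; ring.
  rewrite -tech_pow_Rmult. rewrite (_ : -1 * (-1) ^ k * (-1 * (-1) ^ k) = (-1) ^ k * (-1) ^ k); last ring. exact IH.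
Qed.

Lemma neg1_pow k : (-1) ^ (S k) * (-1) ^ (S (S k)) = -1.
Proof.
  rewrite -(tech_pow_Rmult (-1) (S k)). have := neg1_sq (S k). move => H.
  rewrite (_ : (-1) ^ S k * (-1 * (-1) ^ S k) = - ((-1) ^ S k * (-1) ^ S k)); last ring.
  rewrite H. ring.
Qed.

Lemma term_derive k m x : 0 <= x <= 1/4 ->
  is_derive (fun x => logC_term (S (S k)) x m) x
    (x ^ (S k) * (-8 * x / INR (2 * m + 1) ^ 2 / (1 - 4 * x ^ 2 / INR (2 * m + 1) ^ 2))).
Proof.
  move => Hx. rewrite /logC_term.
  have Hn : 1 <= INR (2 * m + 1).
  { rewrite plus_INR. have := pos_INR (2 * m). simpl. lra. }
  set n := INR (2 * m + 1) in Hn *.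
  rewrite (_ : (S (S k) - 1 = S k)%nat); last lia.
  have Hy : 2 * x / n <= 1/2.
  { apply (Rmult_le_reg_r n); first lra. field_simplify; lra. }
  have Hy0 : 0 <= 2 * x / n.
  { apply Rdiv_le_0_compat; lra. }
  have D1 : is_derive (fun x => LogP (S (S k)) (2 * x / n)) x ((2 / n) * (- (2 * x / n) ^ (S (S k)) / (1 - 2 * x / n))).
  { apply: (is_derive_comp (LogP (S (S k))) (fun x => 2 * x / n)).
    - apply LogP_derive. lra.
    - auto_derive. lra. field. lra. }
  have D2 : is_derive (fun x => LogP (S (S k)) (- (2 * x / n))) x ((- (2 / n)) * (- (- (2 * x / n)) ^ (S (S k)) / (1 - - (2 * x / n)))).
  { apply: (is_derive_comp (LogP (S (S k))) (fun x => - (2 * x / n))).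
    - apply LogP_derive. lra.
    - auto_derive. lra. field. lra. }
  have D := is_derive_scal _ _ ((n / 2) ^ S k) _ (is_derive_plus _ _ _ _ _ D1 (is_derive_scal _ _ ((-1) ^ S k) _ D2)).
  rewrite /plus /= in D.
  apply: (is_derive_conv _ _ _ _ _ D) => //.
  have Hp := neg1_sq k.
  have AB : (n / 2) ^ k * (2 * x / n) ^ k = x ^ k.
  { rewrite -Rpow_mult_distr. f_equal. field. lra. }
  rewrite -tech_pow_Rmult -AB.
  rewrite (_ : - (2 * x / n) = (-1) * (2 * x / n)); last ring.
  rewrite Rpow_mult_distr.
  move: Hp. set p := (-1) ^ k. set a := (n / 2) ^ k. set b := (2 * x / n) ^ k. move => Hp.
  have Hy1 : 1 + 2 * x / n <> 0 by lra.
  have Hy2 : 1 - 2 * x / n <> 0 by lra.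
  apply Rminus_diag_uniq.
  transitivity ((- (n / 2) * a * (2 / n) * (2 * x / n) ^ 2 * b / (1 + 2 * x / n)) * (p * p - 1)).
  - field. split; first lra. split; first lra. split; last lra.
    rewrite (_ : n ^ 2 - 4 * x ^ 2 = (n - 2 * x) * (n + 2 * x)); last ring.
    apply Rmult_integral_contrapositive; split; lra.
  - rewrite Hp. ring.
Qed.

Lemma LogP_0 p : LogP p 0 = 0.
Proof.
  rewrite /LogP Rminus_0_r ln_1 Rplus_0_l.
  apply sum_eq_R0 => j _. rewrite pow_i; last lia. rewrite /Rdiv. ring.
Qed.

Lemma term_0 r m : logC_term r 0 m = 0.
Proof.
  rewrite /logC_term /=. rewrite (_ : 2 * 0 / INR (m + (m + 0) + 1) = 0); last first.
  { rewrite /Rdiv. ring. }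
  rewrite Ropp_0 !LogP_0. ring.
Qed.

Lemma n_ge1 m : 1 <= INR (2 * m + 1).
Proof. rewrite plus_INR. have := pos_INR (2 * m). simpl. lra. Qed.

Ltac clo H := unfold Rdiv in H |- *; simpl in H |- *; repeat split; lra.

Lemma term_int k m :
  logC_term (S (S k)) (1/4) m
  = (1/4) ^ (S k) * Lm m (1/4) - INR (S k) * RInt (fun t => t ^ k * Lm m t) 0 (1/4).
Proof.
  have Hn := n_ge1 m.
  set g' := fun t => t ^ (S k) * (-8 * t / INR (2 * m + 1) ^ 2 / (1 - 4 * t ^ 2 / INR (2 * m + 1) ^ 2)).
  have Hm : forall t, Rmin 0 (1/4) <= t <= Rmax 0 (1/4) -> 0 <= t <= 1/4.
  { move => t. rewrite Rmin_left; last lra. rewrite Rmax_right; lra. }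
  have Hpos : forall t, 0 <= t <= 1/4 -> 0 < 1 - 4 * t ^ 2 / INR (2 * m + 1) ^ 2 := Lm_arg_pos m.
  have D1 : is_RInt g' 0 (1/4) (logC_term (S (S k)) (1/4) m - logC_term (S (S k)) 0 m).
  { apply (RIntD (fun x => logC_term (S (S k)) x m)).
    - move => t /Hm Ht. exact: term_derive.
    - move => t /Hm Ht. apply contD. rewrite /g'. have H := Hpos t Ht. auto_derive. clo H. }
  rewrite term_0 Rminus_0_r in D1. apply RInt_uniq in D1.
  have exL : ex_RInt (fun t => t ^ k * Lm m t) 0 (1/4).
  { apply exRIntC => t /Hm Ht. apply contD. rewrite /Lm. have H := Hpos t Ht. auto_derive. clo H. }
  have exg : ex_RInt g' 0 (1/4).
  { apply exRIntC => t /Hm Ht. apply contD. rewrite /g'. have H := Hpos t Ht. auto_derive. clo H. }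
  have D2 : is_RInt (fun t => INR (S k) * (t ^ k * Lm m t) + 1 * g' t) 0 (1/4)
               ((1/4) ^ (S k) * Lm m (1/4) - 0 ^ (S k) * Lm m 0).
  { apply (RIntD (fun t => t ^ (S k) * Lm m t)).
    - move => t /Hm Ht. rewrite /Lm /g'. have := Hpos t Ht. move => H.
      have Dp := is_derive_pow (fun t => t) (S k) t _ (is_derive_id t).
      move: H Hn. generalize (INR (2 * m + 1)) => n H Hn.
      have DL : is_derive (fun t => ln (1 - 4 * t ^ 2 / n ^ 2)) t ((-8 * t / n ^ 2) / (1 - 4 * t ^ 2 / n ^ 2)).
      { auto_derive. clo H. field. split; [lra | apply: Rgt_not_eq; nra]. }
      have DM := is_derive_mult _ _ _ _ _ Dp DL Rmult_comm.
      apply: (is_derive_conv _ _ _ _ _ DM) => //.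
      rewrite /plus /mult /one /=. ring.
    - move => t /Hm Ht. apply contD. rewrite /Lm /g'. have H := Hpos t Ht. auto_derive. clo H. }
  apply RInt_uniq in D2. rewrite RInt_lin // in D2.
  rewrite D1 pow_i in D2; last lia. rewrite Rmult_0_l Rminus_0_r in D2. lra.
Qed.

Ltac Rring := match goal with |- @eq _ ?a ?b => change (@eq R a b); ring end.

Lemma lim_C C : is_lim_seq (fun n => C / (INR n + 1)) 0.
Proof.
  have H1 : is_lim_seq (fun n => INR (S n)) p_infty.
  { have := is_lim_seq_INR. by move/is_lim_seq_incr_1. }
  have H2 := is_lim_seq_inv _ _ H1 ltac:(discriminate).
  have H3 := is_lim_seq_scal_l _ C _ H2.
  rewrite (_ : Rbar_mult C (Rbar_inv p_infty) = Finite 0) in H3; last by rewrite /= Rmult_0_r.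
  apply: (is_lim_seq_ext _ _ _ _ H3) => n. rewrite S_INR. done.
Qed.

Lemma ln_le_sub1 y : 0 < y -> ln y <= y - 1.
Proof.
  move => Hy. rewrite -{2}(exp_ln y) //.
  have := exp_ineq1_le (ln y). lra.
Qed.

Lemma ln_rho_bound N x : 0 <= x <= 1 -> Rabs (ln (rho N x)) <= 2 / (INR N + 1).
Proof.
  move => Hx. have [Hl Hu] := rho_bounds N x Hx. have Hp := rho_pos N x Hx.
  have Hn := pos_INR N.
  have H0 : ln (rho N x) <= 0.
  { rewrite -ln_1. apply ln_le => //. }
  rewrite Rabs_left1 //.
  have H1 : - ln (rho N x) <= / rho N x - 1.
  { rewrite -ln_Rinv //. apply ln_le_sub1. by apply Rinv_0_lt_compat. }
  have H2 : / rho N x - 1 <= 2 / (INR N + 1).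
  { have Hl' : (2 * INR N + 1) / (2 * INR N + 3) <= rho N x.
    { rewrite (_ : (2 * INR N + 1) / (2 * INR N + 3) = 1 - 2 / (2 * INR N + 3)) //. field. lra. }
    have : / rho N x <= (2 * INR N + 3) / (2 * INR N + 1).
    { rewrite -(Rinv_div (2 * INR N + 1)). apply Rinv_le_contravar => //.
      apply Rdiv_lt_0_compat; lra. }
    move => Hi.
    apply: (Rle_trans _ ((2 * INR N + 3) / (2 * INR N + 1) - 1)); first lra.
    rewrite (_ : (2 * INR N + 3) / (2 * INR N + 1) - 1 = 2 / (2 * INR N + 1)); last by field; lra.
    apply Rmult_le_compat_l; first lra. apply Rinv_le_contravar; lra. }
  lra.
Qed.

Lemma Hm14 t : Rmin 0 (1/4) <= t <= Rmax 0 (1/4) -> 0 <= t <= 1/4.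
Proof. rewrite Rmin_left; last lra. rewrite Rmax_right; lra. Qed.

Lemma ex_tLm k m : ex_RInt (fun t => t ^ k * Lm m t) 0 (1/4).
Proof.
  apply exRIntC => t /Hm14 Ht. apply contD. rewrite /Lm. have H := Lm_arg_pos m t Ht.
  auto_derive. clo H.
Qed.

Lemma cos_pi_pos t : 0 <= t <= 1/4 -> 0 < cos (PI * t).
Proof. move => Ht. have := PI_RGT_0. move => Hp. apply cos_gt_0; nra. Qed.

Lemma ex_tcos k : ex_RInt (fun t => t ^ k * ln (cos (PI * t))) 0 (1/4).
Proof.
  apply exRIntC => t /Hm14 Ht. apply contD. have H := cos_pi_pos t Ht.
  auto_derive. lra.
Qed.

Lemma is_RInt_sum k N :
  is_RInt (fun t => t ^ k * sum_f_R0 (fun m => Lm m t) N) 0 (1/4)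
          (sum_f_R0 (fun m => RInt (fun t => t ^ k * Lm m t) 0 (1/4)) N).
Proof.
  elim: N => [|N IH].
  - apply RInt_cor. apply ex_tLm.
  - have H := @is_RInt_plus R_NormedModule _ _ 0 (1/4) _ _ IH (RInt_cor _ _ _ (ex_tLm k (S N))).
    apply: (@is_RInt_ext R_NormedModule _ _ _ _ _ _ H) => t _.
    rewrite /plus /=. ring.
Qed.

Definition EN N t := ln (cos (PI * t)) - sum_f_R0 (fun m => Lm m t) N.
Definition Jc k := RInt (fun t => t ^ k * ln (cos (PI * t))) 0 (1/4).
Definition Ac k := (1/4) ^ (S k) * ln (cos (PI * (1/4))) - INR (S k) * Jc k.
Definition Bc k N := (1/4) ^ (S k) * ln (rho N (1/4)) - INR (S k) * RInt (fun t => t ^ k * EN N t) 0 (1/4).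

Lemma ex_tEN k N : ex_RInt (fun t => t ^ k * EN N t) 0 (1/4).
Proof.
  have H := exRInt_lin _ _ 0 (1/4) 1 (-1) (ex_tcos k) (ex_intro _ _ (is_RInt_sum k N)).
  apply: (@ex_RInt_ext R_NormedModule _ _ _ _ _ H) => t _. rewrite /EN. change (@eq R (1 * (t ^ k * ln (cos (PI * t))) + -1 * (t ^ k * sum_f_R0 (fun m : nat => Lm m t) N)) (t ^ k * (ln (cos (PI * t)) - sum_f_R0 (fun m : nat => Lm m t) N))). ring.
Qed.

Lemma partial k N : sum_f_R0 (logC_term (S (S k)) (1/4)) N = Ac k - Bc k N.
Proof.
  rewrite (sum_eq _ (fun m => (1/4) ^ (S k) * Lm m (1/4) - INR (S k) * RInt (fun t => t ^ k * Lm m t) 0 (1/4))); last first.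
  { move => i _. apply term_int. }
  rewrite minus_sum.
  rewrite (sum_eq (fun m => (1/4) ^ (S k) * Lm m (1/4)) (fun m => Lm m (1/4) * (1/4) ^ (S k))); last by move => i _; ring.
  rewrite (sum_eq (fun m => INR (S k) * RInt (fun t => t ^ k * Lm m t) 0 (1/4)) (fun m => RInt (fun t => t ^ k * Lm m t) 0 (1/4) * INR (S k))); last by move => i _; ring.
  rewrite -!scal_sum.
  have E1 := ln_cos_sum N (1/4) ltac:(lra).
  have E2 : RInt (fun t => t ^ k * EN N t) 0 (1/4) = Jc k - sum_f_R0 (fun m => RInt (fun t => t ^ k * Lm m t) 0 (1/4)) N.
  { rewrite -(RInt_uniq _ _ _ _ (is_RInt_sum k N)) /Jc.
    rewrite -(Rmult_1_l (RInt (fun t => t ^ k * ln (cos (PI * t))) 0 (1/4))).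
    have Hab : forall a b : R, 1 * a - b = 1 * a + (-1) * b by move => a b; ring. rewrite Hab.
    rewrite -RInt_lin; [|apply ex_tcos| exists (sum_f_R0 (fun m => RInt (fun t => t ^ k * Lm m t) 0 (1/4)) N); apply is_RInt_sum].
    apply RInt_ext => t _. rewrite /EN. Rring. }
  rewrite /Bc /Ac E2 E1. ring.
Qed.

Lemma pow_quarter_le1 n : 0 <= (1/4) ^ n <= 1.
Proof.
  split. apply pow_le; lra.
  apply: (Rle_trans _ (1 ^ n)); [apply pow_incr; split; lra | rewrite pow1; lra].
Qed.

Lemma Bc_bound k N : Rabs (Bc k N) <= (2 + INR (S k)) * 2 / (INR N + 1).
Proof.
  have Hn := pos_INR N. have HK := pos_INR (S k).
  have H1 : Rabs (ln (rho N (1/4))) <= 2 / (INR N + 1) by apply ln_rho_bound; lra.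
  have H2 : Rabs (RInt (fun t => t ^ k * EN N t) 0 (1/4)) <= (1/4 - 0) * (2 / (INR N + 1)).
  { apply abs_RInt_le_const; first lra. apply ex_tEN.
    move => t Ht. rewrite /EN.
    have E := ln_cos_sum N t Ht.
    rewrite (_ : ln (cos (PI * t)) - sum_f_R0 (fun m => Lm m t) N = ln (rho N t)); last lra.
    rewrite Rabs_mult.
    have Hb := ln_rho_bound N t ltac:(lra).
    have Ht1 : Rabs (t ^ k) <= 1.
    { rewrite Rabs_pos_eq; last by apply pow_le; lra.
      rewrite -(pow1 k). apply pow_incr; split; lra. }
    have := Rabs_pos (ln (rho N t)). have := Rabs_pos (t ^ k). nra. }
  have Hq := pow_quarter_le1 (S k).
  rewrite /Bc.
  apply: (Rle_trans _ _ _ (Rabs_triang _ _)).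
  rewrite Rabs_Ropp Rabs_mult Rabs_mult (Rabs_pos_eq ((1/4) ^ S k)); last lra.
  rewrite (Rabs_pos_eq (INR (S k))); last lra.
  have Hd : 0 < 2 / (INR N + 1) by apply Rdiv_lt_0_compat; lra.
  have := Rabs_pos (ln (rho N (1 / 4))). have := Rabs_pos (RInt (fun t => t ^ k * EN N t) 0 (1/4)).
  rewrite (_ : (2 + INR (S k)) * 2 / (INR N + 1) = (2 + INR (S k)) * (2 / (INR N + 1))); last by field; lra.
  nra.
Qed.

Lemma logC_val k : logC (S (S k)) (1/4) = Ac k.
Proof.
  apply is_series_unique.
  have HB : is_lim_seq (Bc k) 0.
  { apply (is_lim_seq_le_le (fun N => - ((2 + INR (S k)) * 2 / (INR N + 1))) _ (fun N => (2 + INR (S k)) * 2 / (INR N + 1))).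
    - move => N. have := Bc_bound k N. move/Rabs_le_between. lra.
    - have := lim_C ((2 + INR (S k)) * 2). move/is_lim_seq_opp. by rewrite /= Ropp_0.
    - apply lim_C. }
  have HS : is_lim_seq (fun N => Ac k - Bc k N) (Ac k).
  { have := is_lim_seq_minus _ _ (Ac k) 0 (Ac k) (is_lim_seq_const (Ac k)) HB.
    rewrite /is_Rbar_minus /is_Rbar_plus /= Ropp_0 Rplus_0_r. move => H. apply H. done. }
  rewrite /is_series.
  apply: (filterlim_ext (fun N => Ac k - Bc k N)) => [N|]; last exact HS.
  rewrite sum_n_Reals partial. done.
Qed.

Lemma subst_int k :
  RInt (fun t => t ^ k * ln (cos (t / 2))) 0 (PI / 2) = (2 * PI) ^ (S k) * Jc k.
Proof.
  have Hp := PI_RGT_0.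
  have Hex : ex_RInt (fun t => t ^ k * ln (cos (t / 2))) (2 * PI * 0 + 0) (2 * PI * (1/4) + 0).
  { apply exRIntC => t Ht. apply contD.
    have Ht' : 0 <= t <= PI / 2.
    { move: Ht. rewrite Rmin_left; last lra. rewrite Rmax_right; lra. }
    have Hc : 0 < cos (t / 2) by apply cos_gt_0; lra.
    auto_derive. lra. }
  have E := RInt_comp_lin _ (2 * PI) 0 0 (1/4) Hex.
  rewrite (_ : 2 * PI * 0 + 0 = 0) in E; last ring.
  rewrite (_ : 2 * PI * (1/4) + 0 = PI / 2) in E; last field.
  rewrite -E /Jc -RInt_sc; last apply ex_tcos.
  apply RInt_ext => t _. rewrite /scal /= /mult /=.
  rewrite (_ : (2 * PI * t + 0) / 2 = PI * t); last field.
  rewrite (_ : 2 * PI * t + 0 = (2 * PI) * t); last ring.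
  rewrite Rpow_mult_distr /=. ring.
Qed.

Theorem corollary2p2 (r : nat) (hr : (2 <= r)%nat) :
  RInt (fun t => t ^ (r - 2) * ln (cos (t / 2))) 0 (PI / 2)
  = - (PI ^ (r - 1) / INR (r - 1))
    * (/ 2 ^ r * ln 2 + 2 ^ (r - 1) * logC r (1 / 4)).
Proof.
  have [k ->] : exists k, r = S (S k) by exists (r - 2)%nat; lia.
  rewrite (_ : (S (S k) - 2 = k)%nat); last lia.
  rewrite (_ : (S (S k) - 1 = S k)%nat); last lia.
  rewrite subst_int logC_val /Ac.
  have Hc : ln (cos (PI * (1/4))) = - (ln 2 / 2).
  { rewrite (_ : PI * (1/4) = PI / 4); last field. rewrite cos_PI4.
    have Hs : 0 < sqrt 2 by apply sqrt_lt_R0; lra.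
    rewrite /Rdiv Rmult_1_l ln_Rinv //.
    have : ln 2 = ln (sqrt 2) + ln (sqrt 2).
    { rewrite -ln_mult // sqrt_sqrt //. lra. }
    lra. }
  rewrite Hc.
  have HK : INR (S k) <> 0 by apply not_0_INR.
  rewrite Rpow_mult_distr.
  have Ha : 0 < 2 ^ S k by apply pow_lt; lra.
  have Hq : (1/4) ^ S k = / (2 ^ S k * 2 ^ S k).
  { rewrite -Rpow_mult_distr -pow_inv. f_equal. field. }
  rewrite Hq (_ : 2 ^ S (S k) = 2 * 2 ^ S k); last done.
  move: Ha HK. generalize (2 ^ S k) (PI ^ S k) (INR (S k)) (Jc k) => a p K J Ha HK. match goal with |- @eq _ ?x ?y => change (@eq R x y) end. field. lra.
Qed.
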